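(* Let $\ell,m,n$ be positive integers with $\ell<n$, $m<n$, $\gcd(m,n)=1$, let $k\in\mathbb{Z}^+$ and $\chi\in\mathbb{Z}$ with $|\chi|<k$, and put $\tilde\ell=\ell_k^\pm+\chi$. Then $$\tilde\ell\,d_k^\pm\bmod n_k^\pm=\big((\ell d\bmod n)\pm\chi n\big)\bmod n_k^\pm,$$ with the same choice of sign throughout.
   Context: $d\in\{1,\dots,n-1\}$ is the inverse of $m$ mod $n$. The left and right Farey roots of $\frac mn$ are the fractions $\frac{m^-}{n^-}<\frac{m^+}{n^+}$ with $m^\pm\ge0$, $n^\pm\ge1$, $m^-+m^+=m$, $n^-+n^+=n$, $m^+n^--m^-n^+=1$. Put $\ell^+=\lceil\ell n^+/n\rceil$, $\ell^-=\lfloor\ell n^-/n\rfloor$, $\ell_k^\pm=k\ell+\ell^\pm$, $m_k^\pm=km+m^\pm$, $n_k^\pm=kn+n^\pm$, and let $d_k^\pm$ be the multiplicative inverse of $m_k^\pm$ modulo $n_k^\pm$. *)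

(* Defs.v *)
From mathcomp Require Import all_boot all_order all_algebra.
Set Implicit Arguments. Unset Strict Implicit. Unset Printing Implicit Defensive.

Definition ceil_div (a b : nat) : nat := (a + b - 1) %/ b.
Definition floor_div (a b : nat) : nat := a %/ b.

(* Main.v *)
Require Import Defs.
From mathcomp Require Import all_boot all_order all_algebra.
From mathcomp Require Import zify ring.
Import Order.TTheory GRing.Theory Num.Theory.

Lemma modnat_dvd {a b N : nat} : a = b %[mod N] -> (Posz N %| (Posz a - Posz b)%R)%Z.
Proof. move=> H; rewrite -eqz_mod_dvd !modz_nat H. by []. Qed.

Lemma aux (a b x y : nat) : a + x = b -> x < y -> a + y - 1 = b + (y - 1 - x).
Proof. lia. Qed.

Lemma aux2 (x y : nat) : 0 < y -> y - 1 - x < y.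
Proof. lia. Qed.

Theorem lemma3p6 (l m n d mm nm mp np k : nat) (chi : int) :
  0 < l -> 0 < m -> l < n -> m < n -> coprime m n ->
  (* d in {1,...,n-1} is the inverse of m mod n *)
  0 < d < n -> m * d = 1 %[mod n] ->
  (* Farey roots mm/nm < mp/np of m/n *)
  0 < nm -> 0 < np -> mm + mp = m -> nm + np = n -> mp * nm = mm * np + 1 ->
  0 < k -> (`|chi| < k%:Z)%R ->
  (* sign + *)
  (forall dkp : nat,
     0 < dkp < k * n + np -> (k * m + mp) * dkp = 1 %[mod k * n + np] ->
     (((Posz (k * l + ceil_div (l * np) n) + chi) * Posz dkp) %% Posz (k * n + np))%Z
     = ((Posz (l * d %% n) + chi * Posz n) %% Posz (k * n + np))%Z)
  /\
  (* sign - *)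
  (forall dkm : nat,
     0 < dkm < k * n + nm -> (k * m + mm) * dkm = 1 %[mod k * n + nm] ->
     (((Posz (k * l + floor_div (l * nm) n) + chi) * Posz dkm) %% Posz (k * n + nm))%Z
     = ((Posz (l * d %% n) - chi * Posz n) %% Posz (k * n + nm))%Z).
Proof.
move=> l0 m0 ln mn cop /andP[d0 dn] Hmd nm0 np0 Hm Hn Hf k0 _.
have n0 : 0 < n by lia.
have [E1 E2] : m * np + 1 = mp * n /\ mm * n + 1 = m * nm.
  by move: Hm Hn Hf => <- <- H; split; rewrite !mulnDr !mulnDl; lia.
have E1z : (Posz mp * Posz n = Posz m * Posz np + 1)%R by rewrite -!PoszM -E1.
have E2z : (Posz m * Posz nm = Posz mm * Posz n + 1)%R by rewrite -!PoszM -E2.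
have copz : coprimez (Posz n) (Posz m) by rewrite coprimezE /= coprime_sym.
have Hmdz := modnat_dvd Hmd.
have ldE := divn_eq (l * d) n.
set r := l * d %% n in ldE *.
set q := l * d %/ n in ldE.
have ldEz : (Posz l * Posz d = Posz q * Posz n + Posz r)%R by rewrite -!PoszM -PoszD -ldE.
split.
- move=> dk _ Hdk.
  have Hdkz := modnat_dvd Hdk.
  have h1 : (Posz n %| (Posz np + Posz d)%R)%Z.
    rewrite -(Gauss_dvdzr _ copz).
    have -> : (Posz m * (Posz np + Posz d) = Posz mp * Posz n + (Posz (m * d) - Posz 1))%R.
      by rewrite E1z PoszM; ring.
    by rewrite rpredD // dvdz_mull.
  have h2 : (n %| l * np + r)%N.
    have -> : (n %| l * np + r)%N = (Posz n %| Posz (l * np + r))%Z by [].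
    have -> : (Posz (l * np + r) = Posz l * (Posz np + Posz d) - Posz q * Posz n)%R.
      by rewrite PoszD PoszM mulrDr ldEz; ring.
    by rewrite rpredD ?rpredN ?dvdz_mull // dvdz_mulr.
  move/dvdnP: h2 => [c Hc].
  have rn : r < n by rewrite ltn_mod.
  have Hceil : ceil_div (l * np) n = c.
    rewrite /ceil_div.
    rewrite (aux _ _ _ _ Hc rn) divnMDl // divn_small ?addn0 //.
    exact: aux2.
  rewrite Hceil.
  apply/eqP; rewrite eqz_mod_dvd.
  set N := Posz (k * n + np).
  have hdn : (N %| (Posz dk - Posz n)%R)%Z.
    have HM : (Posz (k * m + mp) * Posz n - Posz m * N - 1 = 0)%R.
      transitivity (Posz mp * Posz n - Posz m * Posz np - 1)%R.
        by rewrite /N !PoszD !PoszM; ring.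
      by rewrite E1z; ring.
    have -> : (Posz dk - Posz n = Posz n * (Posz ((k * m + mp) * dk) - Posz 1)
                - Posz dk * (Posz (k * m + mp) * Posz n - Posz m * N - 1) - Posz m * N * Posz dk)%R.
      by rewrite PoszM; ring.
    rewrite HM mulr0 subr0 rpredB //; [exact: dvdz_mull | exact: dvdz_mulr (dvdz_mull _ (dvdzz _))].
  have -> : ((Posz (k * l + c) + chi) * Posz dk - (Posz r + chi * Posz n)
     = (Posz (k * l + c) + chi) * (Posz dk - Posz n) + Posz l * N
       + (Posz c * Posz n - Posz (l * np) - Posz r))%R.
    by rewrite /N !PoszD !PoszM; ring.
  have -> : (Posz c * Posz n - Posz (l * np) - Posz r = 0)%R.
    by rewrite -PoszM -Hc PoszD; ring.
  by rewrite addr0 rpredD ?dvdz_mull.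
- move=> dk _ Hdk.
  have Hdkz := modnat_dvd Hdk.
  have h1 : (Posz n %| (Posz nm - Posz d)%R)%Z.
    rewrite -(Gauss_dvdzr _ copz).
    have -> : (Posz m * (Posz nm - Posz d) = Posz mm * Posz n - (Posz (m * d) - Posz 1))%R.
      by rewrite mulrBr E2z PoszM; ring.
    by rewrite rpredB // dvdz_mull.
  have h2 : l * nm %% n = r.
    rewrite /r; apply/eqP; rewrite -eqz_nat -!modz_nat; apply/eqP.
    apply/eqP; rewrite eqz_mod_dvd !PoszM -mulrBr.
    by rewrite dvdz_mull.
  set f := floor_div (l * nm) n.
  have Hf2 : l * nm = f * n + r by rewrite {1}(divn_eq (l * nm) n) h2.
  apply/eqP; rewrite eqz_mod_dvd.
  set N := Posz (k * n + nm).
  have hdn : (N %| (Posz dk + Posz n)%R)%Z.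
    have HM : (Posz m * N - Posz (k * m + mm) * Posz n - 1 = 0)%R.
      transitivity (Posz m * Posz nm - Posz mm * Posz n - 1)%R.
        by rewrite /N !PoszD !PoszM; ring.
      by rewrite E2z; ring.
    have -> : (Posz dk + Posz n = Posz m * N * Posz dk - Posz n * (Posz ((k * m + mm) * dk) - Posz 1)
                - Posz dk * (Posz m * N - Posz (k * m + mm) * Posz n - 1))%R.
      by rewrite PoszM; ring.
    rewrite HM mulr0 subr0 rpredB //; [exact: dvdz_mulr (dvdz_mull _ (dvdzz _)) | exact: dvdz_mull].
  have -> : ((Posz (k * l + f) + chi) * Posz dk - (Posz r - chi * Posz n)
     = (Posz (k * l + f) + chi) * (Posz dk + Posz n) - Posz l * N
       + (Posz (l * nm) - Posz f * Posz n - Posz r))%R.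
    by rewrite /N !PoszD !PoszM; ring.
  have -> : (Posz (l * nm) - Posz f * Posz n - Posz r = 0)%R.
    by rewrite Hf2 PoszD PoszM; ring.
  by rewrite addr0 rpredB ?dvdz_mull.
Qed.
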